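(* Let $n\ge1$, $m\in\mathbb{Z}_{>0}$, $q,q_0,q_1\in(-1,1)$. Let $\boldsymbol{\xi}\in\mathbb{R}^n$ with $\xi_j\notin\pi\mathbb{Z}$ and $\xi_j\pm\xi_k\notin2\pi\mathbb{Z}$ ($j\ne k$) satisfy, for $j=1,\dots,n$, \[ e^{2i(m+1)\xi_j}=\frac{1-q_0e^{i\xi_j}}{e^{i\xi_j}-q_0}\cdot\frac{1-q_1e^{i\xi_j}}{e^{i\xi_j}-q_1}\prod_{k\ne j}\frac{1-qe^{i(\xi_j+\xi_k)}}{e^{i(\xi_j+\xi_k)}-q}\cdot\frac{1-qe^{i(\xi_j-\xi_k)}}{e^{i(\xi_j-\xi_k)}-q}. \] Then for every $\mu\in\mathbb{Z}^n$ with $\mu_1=m+1$, $P_{\texttt{b};\mu}(\boldsymbol{\xi};q,q_0)=q_1\,P_{\texttt{b};\mu-e_1}(\boldsymbol{\xi};q,q_0)$.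
   Context: $e_1,\dots,e_n$ is the standard basis of $\mathbb{R}^n$. $C_{\texttt{b}}(\boldsymbol{\xi};q,q_0)=\prod_{j=1}^n\frac{1-q_0e^{-i\xi_j}}{1-e^{-2i\xi_j}}\prod_{1\le j<k\le n}\frac{1-qe^{-i(\xi_j-\xi_k)}}{1-e^{-i(\xi_j-\xi_k)}}\cdot\frac{1-qe^{-i(\xi_j+\xi_k)}}{1-e^{-i(\xi_j+\xi_k)}}$ and $P_{\texttt{b};\mu}(\boldsymbol{\xi};q,q_0)=\sum_{\sigma\in S_n}\sum_{\epsilon\in\{1,-1\}^n}C_{\texttt{b}}(\epsilon_1\xi_{\sigma_1},\dots,\epsilon_n\xi_{\sigma_n};q,q_0)\exp(i\sum_j\epsilon_j\xi_{\sigma_j}\mu_j)$. *)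

(* Defs.v *)
From HB Require Import structures.
From mathcomp Require Import all_boot all_order all_algebra all_fingroup.
From mathcomp Require Import all_classical all_reals all_analysis.
From mathcomp Require Import complex.
Set Implicit Arguments. Unset Strict Implicit. Unset Printing Implicit Defensive.
Import Order.TTheory GRing.Theory Num.Theory.
Local Open Scope ring_scope.

Definition rC {R : realType} (r : R) : complex R := Complex r 0.

Definition expi {R : realType} (x : R) : complex R := Complex (cos x) (sin x).

Definition bsg {R : realType} (b : bool) : R := if b then -1 else 1.

Definition C_b {R : realType} (n : nat) (xi : 'I_n -> R) (q q0 : R) : complex R :=
  (\prod_(j < n) ((1 - rC q0 * expi (- xi j)) / (1 - expi (- (2 * xi j)))))
  * \prod_(j < n) \prod_(k < n | (j < k)%N)
      ((1 - rC q * expi (- (xi j - xi k))) / (1 - expi (- (xi j - xi k)))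
       * ((1 - rC q * expi (- (xi j + xi k))) / (1 - expi (- (xi j + xi k))))).

Definition P_b {R : realType} (n : nat) (mu : 'I_n -> int) (xi : 'I_n -> R) (q q0 : R)
  : complex R :=
  \sum_(s : 'S_n) \sum_(eps : {ffun 'I_n -> bool})
     C_b (fun j => bsg (eps j) * xi (s j)) q q0
     * expi (\sum_(j < n) bsg (eps j) * xi (s j) * (mu j)%:~R).

(* mu - e_1 (e_1 = first standard basis vector, index 0) *)
Definition minus_e1 (n : nat) (mu : 'I_n -> int) : 'I_n -> int :=
  fun j => if nat_of_ord j == 0%N then mu j - 1 else mu j.

(* Main.v *)
Require Import Defs.
From HB Require Import structures.
From mathcomp Require Import all_boot all_order all_algebra all_fingroup.
From mathcomp Require Import all_classical all_reals all_analysis.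
From mathcomp Require Import complex.
From mathcomp Require Import ring lra.
Import Order.TTheory GRing.Theory Num.Theory.
Local Open Scope ring_scope.
Section SK.
Variable K : fieldType.
Definition gg (q Z Y : K) := (1 - q * (Z * Y)) / (1 - Z * Y) * ((1 - q * (Z * Y^-1)) / (1 - Z * Y^-1)).
Definition HH (q X Y : K) := (1 - q * (X * Y)) / (X * Y - q) * ((1 - q * (X * Y^-1)) / (X * Y^-1 - q)).
Lemma subr_neq0C {a b : K} : a - b != 0 -> b - a != 0.
Proof. by rewrite -opprB oppr_eq0. Qed.
Lemma pt_id (q X Y : K) : X != 0 -> Y != 0 -> Y - X != 0 -> 1 - X * Y != 0 ->
  X - q * Y != 0 -> X * Y - q != 0 ->
  gg q X^-1 Y * HH q X Y = gg q X Y.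
Proof.
move=> hX hY h1 h2 h3 h4; rewrite /gg /HH.
have h1' := subr_neq0C h1; have h2' := subr_neq0C h2.
field.
by rewrite hY h1 h2 h4 hX h1' h2' mulNr h3.
Qed.
Lemma key (q q0 q1 X : K) (n' m' : nat) (Y : 'I_n' -> K) :
  X != 0 -> 1 - X * X != 0 -> X - q0 != 0 -> X - q1 != 0 -> 1 - q0 * X != 0 -> 1 - q1 * X != 0 ->
  (forall k, [/\ Y k != 0, Y k - X != 0, 1 - X * Y k != 0, X - q * Y k != 0 & X * Y k - q != 0]) ->
  X ^+ (2 * m') = (1 - q0 * X) / (X - q0) * ((1 - q1 * X) / (X - q1)) * \prod_k HH q X (Y k) ->
  (1 - q0 * X^-1) / (1 - X^-1 * X^-1) * \prod_k gg q X^-1 (Y k) * X ^+ m' * (1 - q1 * X^-1)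
  + (1 - q0 * X) / (1 - X * X) * \prod_k gg q X (Y k) * (X^-1) ^+ m' * (1 - q1 * X) = 0.
Proof.
move=> hX hXX h0 h1 h0' h1' hY hB.
have -> : \prod_k gg q X (Y k) = \prod_k gg q X^-1 (Y k) * \prod_k HH q X (Y k).
  rewrite -big_split /=; apply: eq_bigr => k _.
  by case: (hY k) => a b c d e; rewrite pt_id.
have hG : (1 - q0 * X) / (X - q0) * ((1 - q1 * X) / (X - q1)) != 0.
  by rewrite !mulf_neq0 // invr_eq0.
have -> : \prod_k HH q X (Y k) = X ^+ (2 * m') / ((1 - q0 * X) / (X - q0) * ((1 - q1 * X) / (X - q1))).
  by rewrite hB mulrC mulKf.
rewrite mulnC exprM exprVn.
set Z := X ^+ m'. set P := \prod_k _.
have hZ : Z != 0 by rewrite expf_neq0.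
have hXX' : 1 - X^-1 * X^-1 != 0.
  have -> : 1 - X^-1 * X^-1 = (X*X - 1) / (X*X) by field.
  by rewrite mulf_neq0 // ?invr_eq0 ?mulf_neq0 // subr_neq0C.
field.
by rewrite hZ h1 h0 h1' h0' hXX hX (subr_neq0C hXX).
Qed.
End SK.
Arguments gg {K}. Arguments HH {K}. Arguments key {K}.
Section S.
Variable R : realType.
Lemma mulcE (a b c d : R) : ((a +i* b) * (c +i* d) = (a*c - b*d) +i* (a*d + b*c))%C.
Proof. by []. Qed.
Lemma addcE (a b c d : R) : ((a +i* b) + (c +i* d) = (a+c) +i* (b+d))%C.
Proof. by []. Qed.
Lemma oppcE (a b : R) : (- (a +i* b) = (-a) +i* (-b))%C.
Proof. by []. Qed.
Lemma onecE : (1 : R[i]) = (1 +i* 0)%C. Proof. by []. Qed.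
Lemma zerocE : (0 : R[i]) = (0 +i* 0)%C. Proof. by []. Qed.
Lemma expiD (a b : R) : expi (a + b) = expi a * expi b.
Proof. by rewrite /expi mulcE cosD sinD [sin a * _ + _]addrC. Qed.
Lemma expi0 : expi (0:R) = 1.
Proof. by rewrite /expi cos0 sin0. Qed.
Lemma expi_neq0 (a : R) : expi a != 0.
Proof.
apply/eqP; rewrite zerocE /expi; case=> h1 h2.
have := cos2Dsin2 a; rewrite h1 h2 !expr2 !mul0r addr0 => /eqP; by rewrite eq_sym oner_eq0.
Qed.
Lemma expiN (a : R) : expi (- a) = (expi a)^-1.
Proof.
apply: (mulIf (expi_neq0 a)); rewrite -expiD addNr expi0 mulVf //; exact: expi_neq0.
Qed.
Lemma expiMn (a : R) (k : nat) : expi (a * k%:R) = expi a ^+ k.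
Proof.
elim: k => [|k IH]; first by rewrite mulr0 expi0.
by rewrite exprS -IH -expiD mulrS mulrDr mulr1.
Qed.
Lemma exprC_sub (r a b: R) : (-1 < r < 1) -> expi a - rC r * expi b != 0.
Proof.
move=> /andP [h1 h2].
apply/eqP; rewrite /expi /rC mulcE oppcE addcE zerocE; case=> e1 e2.
have := cos2Dsin2 a; have := cos2Dsin2 b.
have ea : cos a = r * cos b by move: e1; rewrite mul0r subr0 => /eqP; rewrite subr_eq0 => /eqP.
have eb : sin a = r * sin b by move: e2; rewrite mul0r addr0 => /eqP; rewrite subr_eq0 => /eqP.
rewrite ea eb !exprMn -mulrDr => ->; rewrite mulr1 => /eqP.
rewrite sqrf_eq1 => /orP [] /eqP hr; lra.
Qed.
Lemma expi2pi : expi (2 * pi : R) = 1.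
Proof. by rewrite /expi mulr_natl cos2pi sin2pi. Qed.
Lemma expi_int (z : int) : expi (z%:~R * (2 * pi) : R) = 1.
Proof.
case: z => k.
  by rewrite /= mulrC expiMn expi2pi expr1n.
by rewrite NegzE rmorphN /= mulNr expiN mulrC expiMn expi2pi expr1n invr1.
Qed.
Lemma expi_eq1 (c : R) : expi c = 1 -> exists z : int, c = z%:~R * (2 * pi).
Proof.
move=> hc.
have hT : 0 < 2 * pi :> R by rewrite mulr_gt0 // pi_gt0.
set z := Num.floor (c / (2 * pi)).
exists z.
set r := c - z%:~R * (2 * pi).
have hr0 : 0 <= r.
  rewrite subr_ge0 -ler_pdivlMr //; exact: floor_le.
have hr1 : r < 2 * pi.
  have h := floorD1_gt (c / (2 * pi)).
  rewrite ltr_pdivrMr // rmorphD /= mulrDl mul1r in h.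
  rewrite /r; lra.
have her : expi r = 1 by rewrite /r expiD expiN expi_int invr1 mulr1.
move: her; rewrite /expi onecE; case=> hcr hsr.
suff : r = 0 by move/eqP; rewrite subr_eq0 => /eqP.
have hpi := pi_gt0 R.
have H0 : (0:R) \in `[0, pi] by rewrite in_itv /= lexx pi_ge0.
case: (lerP r pi) => hrp.
  have H1 : r \in `[0, pi] by rewrite in_itv /= hr0 hrp.
  by apply: cos_inj => //; rewrite cos0 hcr.
have H2 : 2 * pi - r \in `[0, pi] by rewrite in_itv /=; apply/andP; split; lra.
have h2p := expi2pi; rewrite /expi onecE in h2p; case: h2p => hc2 hs2.
have : 2 * pi - r = 0.
  apply: cos_inj => //.
  by rewrite cosB hcr hsr hc2 hs2 cos0 !mulr1 mulr0 addr0.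
lra.
Qed.
Lemma expi_sub_neq0 (c d : R) : (forall z : int, c - d != z%:~R * (2 * pi)) -> expi c - expi d != 0.
Proof.
move=> h; apply/negP; rewrite subr_eq0 => /eqP e.
have : expi (c - d) = 1 by rewrite expiD expiN e mulfV // expi_neq0.
by case/expi_eq1 => z hz; move: (h z); rewrite hz eqxx.
Qed.
Definition gfac (q a b : R) : complex R :=
  (1 - rC q * expi (- (a - b))) / (1 - expi (- (a - b)))
  * ((1 - rC q * expi (- (a + b))) / (1 - expi (- (a + b)))).
Definition Af {n' : nat} (q q0 a : R) (v : 'I_n' -> R) : complex R :=
  (1 - rC q0 * expi (- a)) / (1 - expi (- (2 * a))) * \prod_(k < n') gfac q a (v k).
Lemma C_b_split (n' : nat) (u : 'I_n'.+1 -> R) (q q0 : R) :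
  C_b u q q0 = Af q q0 (u ord0) (fun k => u (lift ord0 k)) * C_b (fun k => u (lift ord0 k)) q q0.
Proof.
rewrite /C_b /Af big_ord_recl [X in _ * X]big_ord_recl.
have -> : \prod_(k < n'.+1 | (@ord0 n' < k)%N)
      ((1 - rC q * expi (- (u ord0 - u k))) / (1 - expi (- (u ord0 - u k))) *
       ((1 - rC q * expi (- (u ord0 + u k))) / (1 - expi (- (u ord0 + u k)))))
   = \prod_(k < n') gfac q (u ord0) (u (lift ord0 k)).
  by rewrite big_mkcond big_ord_recl /= mul1r.
have H : forall i : 'I_n',
   \prod_(k < n'.+1 | (lift ord0 i < k)%N)
      ((1 - rC q * expi (- (u (lift ord0 i) - u k))) / (1 - expi (- (u (lift ord0 i) - u k))) *
       ((1 - rC q * expi (- (u (lift ord0 i) + u k))) / (1 - expi (- (u (lift ord0 i) + u k)))))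
   = \prod_(k < n' | (i < k)%N)
      ((1 - rC q * expi (- (u (lift ord0 i) - u (lift ord0 k)))) / (1 - expi (- (u (lift ord0 i) - u (lift ord0 k)))) *
       ((1 - rC q * expi (- (u (lift ord0 i) + u (lift ord0 k)))) / (1 - expi (- (u (lift ord0 i) + u (lift ord0 k)))))).
  by move=> i; rewrite big_mkcond big_ord_recl /= mul1r [RHS]big_mkcond.
rewrite (eq_bigr _ (fun i _ => H i)).
rewrite -!mulrA; congr (_ * (_ * _)); exact: mulrCA.
Qed.
Definition Phi {n' : nat} (q q0 q1 : R) (m : nat) (a : R) (v : 'I_n' -> R) : complex R :=
  Af q q0 a v * expi (a * (m.+1)%:R) * (1 - rC q1 * expi (- a)).
Lemma T_form (n' : nat) (mu : 'I_n'.+1 -> int) (m : nat) (q q0 q1 : R) (u : 'I_n'.+1 -> R) :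
  mu ord0 = (m.+1)%:Z ->
  C_b u q q0 * expi (\sum_(j < n'.+1) u j * (mu j)%:~R)
  - rC q1 * (C_b u q q0 * expi (\sum_(j < n'.+1) u j * (minus_e1 mu j)%:~R))
  = C_b (fun k => u (lift ord0 k)) q q0
    * expi (\sum_(k < n') u (lift ord0 k) * (mu (lift ord0 k))%:~R)
    * Phi q q0 q1 m (u ord0) (fun k => u (lift ord0 k)).
Proof.
move=> hmu.
rewrite C_b_split /Phi !big_ord_recl.
have -> : minus_e1 mu ord0 = mu ord0 - 1 by rewrite /minus_e1 /=.
have -> : \sum_(i < n') u (lift ord0 i) * (minus_e1 mu (lift ord0 i))%:~R = \sum_(i < n') u (lift ord0 i) * (mu (lift ord0 i))%:~R.
  by apply: eq_bigr => i _; rewrite /minus_e1 /=.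
rewrite hmu rmorphB /= mulrBr mulr1 -addrA [- _ + _]addrC addrA !expiD expiN.
set A := Af _ _ _ _. set C := C_b _ _ _. set E := expi (\sum_(i < n') _).
ring.
Qed.
Lemma expi_NB (a b : R) : expi (- (a - b)) = (expi a)^-1 * expi b.
Proof. by rewrite opprB expiD expiN mulrC. Qed.
Lemma expi_ND (a b : R) : expi (- (a + b)) = (expi a)^-1 * (expi b)^-1.
Proof. by rewrite opprD expiD !expiN. Qed.
Lemma expi_N2 (a : R) : expi (- (2 * a)) = (expi a)^-1 * (expi a)^-1.
Proof. by rewrite mulr_natl mulr2n expi_ND. Qed.
Lemma gfacE (q a b : R) : gfac q a b = gg (rC q) (expi a)^-1 (expi b).
Proof. by rewrite /gfac /gg expi_NB expi_ND. Qed.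
Lemma Phi_E n' (q q0 q1 : R) m a (v : 'I_n' -> R) :
  Phi q q0 q1 m a v = (1 - rC q0 * (expi a)^-1) / (1 - (expi a)^-1 * (expi a)^-1)
   * \prod_(k < n') gg (rC q) (expi a)^-1 (expi (v k)) * expi a ^+ m.+1 * (1 - rC q1 * (expi a)^-1).
Proof. by rewrite /Phi /Af expi_N2 expiN (eq_bigr _ (fun k _ => gfacE q a (v k))) expiMn. Qed.
Lemma not2pi_N (c : R) : (forall z : int, c != z%:~R * (2 * pi)) -> forall z : int, - c != z%:~R * (2 * pi).
Proof. by move=> h z; rewrite -[X in _ != X]opprK eqr_opp -mulNr -rmorphN h. Qed.
Lemma Phi_sym n' (q q0 q1 : R) m (x0 : R) (v : 'I_n' -> R) :
  -1 < q < 1 -> -1 < q0 < 1 -> -1 < q1 < 1 ->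
  (forall z : int, x0 != z%:~R * pi) ->
  (forall k (z : int), (x0 + v k != z%:~R * (2 * pi)) /\ (x0 - v k != z%:~R * (2 * pi))) ->
  expi x0 ^+ (2 * m.+1) = (1 - rC q0 * expi x0) / (expi x0 - rC q0)
     * ((1 - rC q1 * expi x0) / (expi x0 - rC q1)) * \prod_k HH (rC q) (expi x0) (expi (v k)) ->
  Phi q q0 q1 m x0 v + Phi q q0 q1 m (- x0) v = 0.
Proof.
move=> hq hq0 hq1 hx hv hB.
rewrite !Phi_E expiN invrK.
have e1 : forall r : R, expi x0 - rC r = expi x0 - rC r * expi 0 by move=> r; rewrite expi0 mulr1.
have e2 : forall r : R, 1 - rC r * expi x0 = expi 0 - rC r * expi x0 by move=> r; rewrite expi0.
apply: key.
- exact: expi_neq0.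
- rewrite -expiD -expi0; apply: expi_sub_neq0; rewrite sub0r; apply: not2pi_N => z.
  apply/eqP => e; move: (hx z); suff -> : x0 = z%:~R * pi by rewrite eqxx.
  apply: (@mulfI _ 2); first by rewrite pnatr_eq0.
  by rewrite mulr_natl mulr2n e mulrCA.
- by rewrite e1 exprC_sub.
- by rewrite e1 exprC_sub.
- by rewrite e2 exprC_sub.
- by rewrite e2 exprC_sub.
- move=> k; have hp z := (hv k z).1; have hm z := (hv k z).2; split.
  + exact: expi_neq0.
  + by apply: expi_sub_neq0 => z; rewrite -opprB; apply: not2pi_N.
  + by rewrite -expiD -expi0; apply: expi_sub_neq0 => z; rewrite sub0r; apply: not2pi_N.
  + exact: exprC_sub.
  + by rewrite -expiD -[X in _ - X]mulr1 -expi0 exprC_sub.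
- by rewrite hB.
Qed.
Lemma HH_expi (c x t : R) : HH (rC c) (expi x) (expi t) =
  (1 - rC c * expi (x + t)) / (expi (x + t) - rC c) * ((1 - rC c * expi (x - t)) / (expi (x - t) - rC c)).
Proof. by rewrite /HH !expiD expiN. Qed.
Lemma HH_bsg (c : complex R) (X : complex R) b (t : R) : HH c X (expi (bsg b * t)) = HH c X (expi t).
Proof. case: b; rewrite /bsg /= ?mul1r // mulN1r expiN /HH invrK mulrC //. Qed.
Lemma reindex_s n' (s : 'S_n'.+1) (G : 'I_n'.+1 -> complex R) :
  \prod_(k < n'.+1 | k != s ord0) G k = \prod_(k < n') G (s (lift ord0 k)).
Proof.
rewrite (reindex_inj (@perm_inj _ s)) /=.
rewrite (eq_bigl (fun k => k != ord0)); last by move=> k; rewrite (inj_eq (@perm_inj _ s)).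
rewrite big_mkcond big_ord_recl eqxx /= mul1r; apply: eq_bigr => k _.
by [].
Qed.
End S.
Arguments Phi {R n'}. Arguments T_form {R}. Arguments Phi_sym {R}. Arguments HH_expi {R}. Arguments HH_bsg {R}. Arguments reindex_s {R}.

Theorem mainTheorem10 (R : realType) (n : nat) (hn : (0 < n)%N) (m : nat) (hm : (0 < m)%N)
  (q q0 q1 : R)
  (hq : -1 < q < 1) (hq0 : -1 < q0 < 1) (hq1 : -1 < q1 < 1)
  (xi : 'I_n -> R)
  (hxi1 : forall (j : 'I_n) (z : int), xi j != z%:~R * pi)
  (hxi2 : forall (j k : 'I_n) (z : int), j != k ->
            (xi j + xi k != z%:~R * (2 * pi)) /\ (xi j - xi k != z%:~R * (2 * pi)))
  (hBethe : forall j : 'I_n,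
     expi (2 * (m.+1)%:R * xi j) =
       (1 - rC q0 * expi (xi j)) / (expi (xi j) - rC q0)
       * ((1 - rC q1 * expi (xi j)) / (expi (xi j) - rC q1))
       * \prod_(k < n | k != j)
           ((1 - rC q * expi (xi j + xi k)) / (expi (xi j + xi k) - rC q)
            * ((1 - rC q * expi (xi j - xi k)) / (expi (xi j - xi k) - rC q))))
  (mu : 'I_n -> int) (hmu : mu (Ordinal hn) = (m.+1)%:Z) :
  P_b mu xi q q0 = rC q1 * P_b (minus_e1 mu) xi q q0.
Proof.
case: n hn xi hxi1 hxi2 hBethe mu hmu => [//|n'] hn xi hxi1 hxi2 hBethe mu hmu.
have e0 : Ordinal hn = ord0 by apply: val_inj.
rewrite e0 in hmu.
rewrite /P_b; apply/eqP; rewrite -subr_eq0 mulr_sumr -sumrB; apply/eqP.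
apply: big1 => s _; rewrite mulr_sumr -sumrB.
pose v (eps : {ffun 'I_n'.+1 -> bool}) := fun k : 'I_n' => bsg (eps (lift ord0 k)) * xi (s (lift ord0 k)).
pose F (eps : {ffun 'I_n'.+1 -> bool}) :=
  C_b (v eps) q q0 * expi (\sum_(k < n') v eps k * (mu (lift ord0 k))%:~R).
rewrite (eq_bigr (fun eps => F eps * Phi q q0 q1 m (bsg (eps ord0) * xi (s ord0)) (v eps))); last first.
  by move=> eps _; exact: (T_form _ _ _ _ _ _ (fun j => bsg (eps j) * xi (s j)) hmu).
set j0 := s ord0.
have hv : forall (eps : {ffun 'I_n'.+1 -> bool}) (k : 'I_n') (z : int), (xi j0 + v eps k != z%:~R * (2 * pi)) /\ (xi j0 - v eps k != z%:~R * (2 * pi)).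
  move=> eps k z.
  have hne : j0 != s (lift ord0 k) by rewrite (inj_eq (@perm_inj _ s)) neq_lift.
  case: (hxi2 _ _ z hne) => h1 h2.
  rewrite /v; case: (eps (lift ord0 k)); rewrite /bsg /= ?mul1r ?mulN1r ?opprK; by split.
have hB : forall (eps : {ffun 'I_n'.+1 -> bool}), expi (xi j0) ^+ (2 * m.+1) = (1 - rC q0 * expi (xi j0)) / (expi (xi j0) - rC q0)
     * ((1 - rC q1 * expi (xi j0)) / (expi (xi j0) - rC q1)) * \prod_k HH (rC q) (expi (xi j0)) (expi (v eps k)).
  move=> eps.
  rewrite -expiMn natrM mulrC hBethe reindex_s; congr (_ * _).
  by apply: eq_bigr => k _; rewrite /v HH_bsg HH_expi.
have hPhi : forall (eps : {ffun 'I_n'.+1 -> bool}), Phi q q0 q1 m (bsg (eps ord0) * xi j0) (v eps)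
     + Phi q q0 q1 m (- (bsg (eps ord0) * xi j0)) (v eps) = 0.
  move=> eps.
  have H := Phi_sym n' q q0 q1 m (xi j0) (v eps) hq hq0 hq1 (hxi1 j0) (hv eps) (hB eps).
  case: (eps ord0); rewrite /bsg /= ?mul1r // mulN1r opprK addrC //.
pose flip (eps : {ffun 'I_n'.+1 -> bool}) : {ffun 'I_n'.+1 -> bool} :=
  [ffun j => if j == ord0 then ~~ eps j else eps j].
have flipK : involutive flip.
  by move=> eps; apply/ffunP => j; rewrite !ffunE; case: eqP => //= _; exact: negbK.
have vflip : forall (eps : {ffun 'I_n'.+1 -> bool}), v (flip eps) = v eps.
  move=> eps; apply: funext => k; rewrite /v ffunE.
  by rewrite eq_sym (negbTE (neq_lift _ _)).
have f0 : forall (eps : {ffun 'I_n'.+1 -> bool}), flip eps ord0 = ~~ eps ord0 by move=> eps; rewrite ffunE eqxx.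
have hT : forall (eps : {ffun 'I_n'.+1 -> bool}), F (flip eps) * Phi q q0 q1 m (bsg (flip eps ord0) * xi (s ord0)) (v (flip eps))
     = - (F eps * Phi q q0 q1 m (bsg (eps ord0) * xi (s ord0)) (v eps)).
  move=> eps; rewrite /F f0 vflip -mulrN; congr (_ * _).
  have -> : bsg (~~ eps ord0) * xi (s ord0) = - (bsg (eps ord0) * xi (s ord0)).
    by case: (eps ord0); rewrite /bsg /= ?mulN1r ?mul1r ?opprK.
  by apply/eqP; rewrite -addr_eq0 addrC hPhi.
have hS : \sum_i F i * Phi q q0 q1 m (bsg (i ord0) * xi (s ord0)) (v i)
        = - \sum_i F i * Phi q q0 q1 m (bsg (i ord0) * xi (s ord0)) (v i).
  rewrite {1}(reindex_inj (inv_inj flipK)) /= -sumrN.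
  by apply: eq_bigr => eps _; rewrite hT.
move/eqP: hS; rewrite -addr_eq0 -mulr2n mulrn_eq0 /= => /eqP; done.
Qed.
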